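(* Let $n\geq 4$. Then $AQ_n$ is fractional strongly maximally matched and fractional strongly super matched; that is, $fsmp(AQ_n)=2n-1$, and for every $F\subseteq V(AQ_n)\cup E(AQ_n)$ with $|F|=2n-1$ such that $AQ_n-F$ has no fractional perfect matching, $AQ_n-F$ has an isolated vertex.
   Context: The $n$-dimensional augmented cube $AQ_n$ ($n\geq 1$) has vertex set all binary strings $u_1u_2\cdots u_n$. $AQ_1\cong K_2$ on vertices $0,1$. For $n\geq 2$, $AQ_n$ consists of a copy $AQ^0_{n-1}$ of $AQ_{n-1}$ with $0$ prefixed to every label and a copy $AQ^1_{n-1}$ with $1$ prefixed, plus the following edges: $0u_1\cdots u_{n-1}$ is adjacent to $1v_1\cdots v_{n-1}$ iff either $u_i=v_i$ for all $i$ (cross edge) or $u_i\neq v_i$ for all $i$ (complement edge). $AQ_n$ is $(2n-1)$-regular. For $F\subseteq V(G)\cup E(G)$, $G-F$ denotes $G$ with the vertices and edges of $F$ deleted. A fractional perfect matching of $G$ is $f:E(G)\to[0,1]$ with $\sum_{e\ni v}f(e)=1$ for every vertex $v$. A fractional strong matching preclusion (FSMP) set is $F\subseteq V(G)\cup E(G)$ with $G-F$ having no fractional perfect matching; $fsmp(G)$ is the minimum size of an FSMP set, and an FSMP set of that size is optimal. $G$ is fractional strongly maximally matched if $fsmp(G)=\delta(G)$, and fractional strongly super matched if in addition $G-F$ has an isolated vertex for every optimal FSMP set $F$. *)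

(* Defs.v *)
From HB Require Import structures.
From mathcomp Require Import all_boot all_order all_algebra.
Set Implicit Arguments. Unset Strict Implicit. Unset Printing Implicit Defensive.
Import Order.TTheory GRing.Theory Num.Theory.

(* Adjacency of the augmented cube, following the recursive definition:
   labels are bit strings u_1 u_2 ... u_n stored as sequences with u_1 (the
   prefix added at the last recursion step) at the head.
   x::u ~ y::v  iff  (x = y and u ~ v in AQ_{n-1})
                 or (x <> y and (u = v  or  u, v differ in every position)). *)
Fixpoint aq_adj (u v : seq bool) : bool :=
  match u, v with
  | x :: u', y :: v' =>
      if x == y then aq_adj u' v'
      else (u' == v') || all2 (fun a b => a != b) u' v'
  | _, _ => false
  end.

Definition AQV (n : nat) := (n.-tuple bool)%type.

Definition AQE (n : nat) : {set {set AQV n}} :=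
  [set e : {set AQV n} | [exists u : AQV n, exists v : AQV n,
       aq_adj u v && (e == [set u; v])]].

(* A set F of vertices and edges of AQ_n is a pair (FV, FE) with FE a set of
   edges of AQ_n; its size is #|FV| + #|FE|. *)
Definition valid_fault (n : nat) (FV : {set AQV n}) (FE : {set {set AQV n}}) :=
  FE \subset AQE n.

Definition fault_size (n : nat) (FV : {set AQV n}) (FE : {set {set AQV n}}) :=
  (#|FV| + #|FE|)%N.

Definition rem_edges (n : nat) (FV : {set AQV n}) (FE : {set {set AQV n}}) :
  {set {set AQV n}} :=
  [set e in AQE n | (e \notin FE) && [disjoint e & FV]].

Definition has_fpm (R : realFieldType) (n : nat)
    (FV : {set AQV n}) (FE : {set {set AQV n}}) : Prop :=
  exists f : {set AQV n} -> R,
    (forall e, e \in rem_edges FV FE -> (0 <= f e <= 1)%R) /\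
    (forall v : AQV n, v \notin FV ->
       (\sum_(e in rem_edges FV FE | v \in e) f e)%R = 1%R).

Definition is_fsmp_set (R : realFieldType) (n : nat)
    (FV : {set AQV n}) (FE : {set {set AQV n}}) : Prop :=
  valid_fault FV FE /\ ~ has_fpm R FV FE.

Definition fsmp_is (R : realFieldType) (n k : nat) : Prop :=
  (exists FV FE, @is_fsmp_set R n FV FE /\ fault_size FV FE = k) /\
  (forall FV FE, @is_fsmp_set R n FV FE -> k <= fault_size FV FE).

Definition isolated_in (n : nat) (FV : {set AQV n}) (FE : {set {set AQV n}})
    (v : AQV n) : Prop :=
  v \notin FV /\ (forall e, e \in rem_edges FV FE -> v \notin e).

(* Main.v *)
Require Import Defs.
From HB Require Import structures.
From mathcomp Require Import all_boot all_order all_algebra.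
From mathcomp Require Import zify.
Set Implicit Arguments. Unset Strict Implicit. Unset Printing Implicit Defensive.

Lemma all2_sym (s t : seq bool) :
  all2 (fun a b => a != b) s t = all2 (fun a b => a != b) t s.
Proof. by elim: s t => [|x s IH] [|y t] //=; rewrite IH eq_sym. Qed.

Lemma aq_adj_sym (u v : seq bool) : aq_adj u v = aq_adj v u.
Proof.
elim: u v => [|x u IH] [|y v] //=.
rewrite eq_sym; case: (y == x); first exact: IH.
by rewrite eq_sym all2_sym.
Qed.

Lemma aq_adj_irr (u : seq bool) : aq_adj u u = false.
Proof. by elim: u => //= x u IH; rewrite eqxx. Qed.

Lemma all2_neq (s t : seq bool) : size s = size t ->
  all2 (fun a b => a != b) s t = (t == map negb s).
Proof.
elim: s t => [|x s IH] [|y t] //= [] /IH ->.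
by rewrite eqseq_cons; case: x; case: y.
Qed.

Definition tc n (b : bool) (u : AQV n) : AQV n.+1 := [tuple of b :: u].
Definition cpl n (u : AQV n) : AQV n := [tuple of map negb u].
Arguments cpl {n} u.

Lemma adj_tc n b c (u v : AQV n) :
  aq_adj (tc b u) (tc c v) = if b == c then aq_adj u v else (u == v) || (v == cpl u).
Proof.
rewrite /= ; case: (b == c) => //.
by rewrite all2_neq ?size_tuple.
Qed.

Lemma tc_inj2 n b c (u v : AQV n) : tc b u = tc c v -> b = c /\ u = v.
Proof.
move/(congr1 val) => /= [-> h]; split => //; exact: val_inj.
Qed.

Lemma tc_inj n b : injective (@tc n b).
Proof. by move=> u v /tc_inj2 []. Qed.

Lemma tcE n (x : AQV n.+1) : x = tc (thead x) [tuple of behead x].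
Proof. exact: tuple_eta. Qed.

Lemma tcP n (P : AQV n.+1 -> Prop) : (forall b u, P (tc b u)) -> forall x, P x.
Proof. by move=> H x; rewrite (tcE x). Qed.

Lemma mem_tc_imset n b c (u : AQV n) (S : {set AQV n}) :
  (tc b u \in tc c @: S) = (b == c) && (u \in S).
Proof.
apply/imsetP/andP => [[v vS /tc_inj2 [-> ->]]|[/eqP -> uS]]; first by [].
by exists u.
Qed.

Lemma cpl_neq n (u : AQV n.+1) : u != cpl u.
Proof.
case: u => [[|x s] //= hs]; apply/eqP => /(congr1 val) /= [].
by case: x.
Qed.

Lemma cplK n : involutive (@cpl n).
Proof. by move=> u; apply: val_inj => /=; rewrite -map_comp map_id_in // => x _ /=; rewrite negbK. Qed.

Definition hlf n (b : bool) (A : {set AQV n.+1}) : {set AQV n} := [set u | tc b u \in A].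

Lemma card_half n (A : {set AQV n.+1}) : #|A| = #|hlf false A| + #|hlf true A|.
Proof.
have eA : A = tc false @: hlf false A :|: tc true @: hlf true A.
  apply/setP; apply: tcP => b u; rewrite inE !mem_tc_imset !inE.
  by case: b; rewrite /= ?orbF.
rewrite {1}eA.
rewrite cardsU (_ : _ :&: _ = set0) ?cards0 ?subn0 ?card_imset //; try exact: tc_inj.
apply/setP; apply: tcP => b u; rewrite !inE !mem_tc_imset.
by case: b; rewrite ?andbF.
Qed.

Definition bd n (A : {set AQV n}) := [set u | (u \notin A) && [exists a in A, aq_adj a u]].
Definition E2 n (A : {set AQV n}) :=
  [set p : AQV n * AQV n | [&& p.1 \in A, p.2 \in A & aq_adj p.1 p.2]].
Definition pot n (A : {set AQV n}) := 2 * #|bd A| + #|E2 A|.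

Lemma lower_disj (T : finType) (S B0 B1 : {set T}) :
  B0 \subset S -> B1 \subset S -> [disjoint B0 & B1] -> #|B0| + #|B1| <= #|S|.
Proof.
move=> h0 h1 hd.
have := leq_card_setU B0 B1; rewrite hd => -[_ /eqP <-].
by apply: subset_leq_card; rewrite subUset h0.
Qed.

Definition tc2 n b (p : AQV n * AQV n) : AQV n.+1 * AQV n.+1 := (tc b p.1, tc b p.2).

Lemma tc2_inj n b : injective (@tc2 n b).
Proof. move=> [x y] [z w] e.
have h1 : x = z := tc_inj (congr1 fst e).
have h2 : y = w := tc_inj (congr1 snd e).
by rewrite h1 h2. Qed.

Lemma mem_tc2 n b c (p : AQV n * AQV n) (S : {set AQV n * AQV n}) :
  (tc2 b p \in tc2 c @: S) = (b == c) && (p \in S).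
Proof.
apply/imsetP/andP => [[q qS e]|[/eqP -> pS]].
  have [-> e1] := tc_inj2 (congr1 fst e).
  have [_ e2] := tc_inj2 (congr1 snd e).
  by split => //; case: p q qS e1 e2 e => x y [z w] /= ? -> ->.
by exists p.
Qed.

Lemma mem_tc2' n b b' c (u v : AQV n) (S : {set AQV n * AQV n}) :
  ((tc b u, tc b' v) \in tc2 c @: S) = [&& b == c, b' == c & ((u, v) \in S)].
Proof.
apply/imsetP/and3P => [[q qS e]|[/eqP -> /eqP -> pS]]; last by exists (u, v).
have [-> e1] := tc_inj2 (congr1 fst e).
have [-> e2] := tc_inj2 (congr1 snd e).
by rewrite !eqxx; split => //; case: q qS e1 e2 e => x y /= ? -> ->.
Qed.

Lemma bd_tc n b (A : {set AQV n.+1}) : tc b @: bd (hlf b A) \subset bd A.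
Proof.
apply/subsetP => x /imsetP [u]; rewrite !inE => /andP [uA /existsP [a /andP [aA adj]]] ->.
rewrite inE in aA; rewrite uA /=; apply/existsP; exists (tc b a); rewrite aA /=.
by rewrite eqxx.
Qed.

Lemma E2_tc n b (A : {set AQV n.+1}) : tc2 b @: E2 (hlf b A) \subset E2 A.
Proof.
apply/subsetP => x /imsetP [[u v]]; rewrite !inE /= => /and3P [uA vA adj] ->.
by rewrite /tc2 /= uA vA eqxx.
Qed.

Lemma pot_split n (A : {set AQV n.+1}) :
  pot (hlf false A) + pot (hlf true A) <= pot A.
Proof.
rewrite /pot addnACA -mulnDr; apply: leq_add.
  rewrite leq_mul2l; apply/orP; right.
  rewrite -(card_imset _ (@tc_inj n false)) -(card_imset _ (@tc_inj n true)).
  apply: lower_disj; try exact: bd_tc.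
  rewrite -setI_eq0; apply/eqP/setP; apply: tcP => b u; rewrite !inE !mem_tc_imset.
  by case: b; rewrite ?andbF.
rewrite -(card_imset _ (@tc2_inj n false)) -(card_imset _ (@tc2_inj n true)).
apply: lower_disj; try exact: E2_tc.
rewrite -setI_eq0; apply/eqP/setP => -[x y]; rewrite !inE (tcE x) (tcE y).
by rewrite !mem_tc2'; case: (thead x); rewrite ?andbF.
Qed.

Lemma pot_one n b (A : {set AQV n.+1}) : hlf (~~b) A = set0 ->
  pot (hlf b A) + 2 * #|hlf b A :|: cpl @: hlf b A| <= pot A.
Proof.
move=> h0; rewrite /pot addnAC -mulnDr; apply: leq_add.
  rewrite leq_mul2l; apply/orP; right.
  rewrite -(card_imset _ (@tc_inj n b)) -(card_imset _ (@tc_inj n (~~b))).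
  apply: lower_disj; first exact: bd_tc.
    apply/subsetP => x /imsetP [u uU ->]; rewrite inE.
    have -> : (tc (~~ b) u \in A) = false.
      apply/negP => h; suff : u \in (set0 : {set AQV n}) by rewrite inE.
      by rewrite -h0 inE.
    apply/andP; split; first by [].
    move: uU; rewrite inE => /orP [uA|/imsetP [w wA ->]].
      apply/existsP; exists (tc b u); rewrite inE in uA; rewrite uA adj_tc.
      by case: b {h0 uA}; rewrite /= eqxx.
    apply/existsP; exists (tc b w); rewrite inE in wA; rewrite wA adj_tc.
    by case: b {h0 wA}; rewrite /= !eqxx orbT.
  rewrite -setI_eq0; apply/eqP/setP; apply: tcP => c u; rewrite !inE !mem_tc_imset.
  by case: b {h0}; case: c; rewrite ?andbF.
rewrite -(card_imset _ (@tc2_inj n b)); apply: subset_leq_card; exact: E2_tc.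
Qed.

Definition RR n := forall A : {set AQV n}, A != set0 ->
  2 * #|A| + 2 * (2 * n - 2) + 2 * (1 < #|A|) <= pot A.

Lemma U_ge2 n (S : {set AQV n.+1}) : S != set0 -> 2 <= #|S :|: cpl @: S|.
Proof.
case/set0Pn => a aS.
have := cards2 a (cpl a); rewrite cpl_neq => <-.
apply: subset_leq_card; apply/subsetP => x; rewrite !inE => /orP [] /eqP ->.
  by rewrite aS.
by rewrite imset_f ?orbT.
Qed.

Lemma RR_step n : 3 <= n -> RR n -> RR n.+1.
Proof.
case: n => // m hm IH A A0.
have hc := card_half A.
have [e0|n0] := eqVneq (hlf false A) set0; last have [e1|n1] := eqVneq (hlf true A) set0.
- have h := pot_one (b:=true) e0.
  have n1 : hlf true A != set0.
    by apply: contraNneq A0 => e1; rewrite -cards_eq0 hc e0 e1 !cards0.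
  have := IH (hlf true A) n1; have := U_ge2 n1.
  rewrite hc e0 cards0 add0n; move: h; set k := (1 < _); lia.
- have h := pot_one (b:=false) e1.
  have := IH (hlf false A) n0; have := U_ge2 n0.
  rewrite hc e1 cards0 addn0; move: h; set k := (1 < _); lia.
- have h := pot_split A.
  have := IH _ n0; have := IH _ n1.
  rewrite hc; move: h.
  set k0 := (1 < #|hlf false A|); set k1 := (1 < #|hlf true A|); set k := (1 < _ + _).
  have : k <= 1 by case: k.
  have : k0 <= 1 by case: k0.
  have : k1 <= 1 by case: k1.
  lia.
Qed.

Fixpoint tuples n : seq (seq bool) :=
  if n is n'.+1 then map (cons false) (tuples n') ++ map (cons true) (tuples n')
  else [:: [::]].

Lemma mem_tuples n s : (s \in tuples n) = (size s == n).
Proof.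
have hb (b : bool) : injective (cons b) by move=> ? ? [].
elim: n s => [|n IH] [|x s] /=.
- by [].
- by case: s.
- by rewrite mem_cat; apply/negP => /orP [] /mapP [].
rewrite mem_cat eqSS -IH.
case: x; rewrite (mem_map (hb _)).
  suff -> : (true :: s \in [seq false :: x | x <- tuples n]) = false by [].
  by apply/mapP => -[].
suff -> : (false :: s \in [seq true :: x | x <- tuples n]) = false by rewrite orbF.
by apply/mapP => -[].
Qed.

Lemma uniq_tuples n : uniq (tuples n).
Proof.
have hb (b : bool) : injective (cons b) by move=> ? ? [].
elim: n => //= n IH; rewrite cat_uniq !map_inj_uniq // IH /= andbT.
by apply/hasP => -[x /mapP [y _ ->] /mapP [z _]].
Qed.

Definition ins n (s : seq bool) : AQV n := insubd [tuple of nseq n false] s.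

Lemma insK n (s : seq bool) : size s == n -> val (@ins n s) = s.
Proof. by move=> h; rewrite /ins val_insubd h. Qed.

Lemma perm_tuples n : perm_eq (map val (enum {: AQV n})) (tuples n).
Proof.
apply: uniq_perm; first by rewrite map_inj_uniq ?enum_uniq //; exact: val_inj.
  exact: uniq_tuples.
move=> s; rewrite mem_tuples; apply/mapP/idP => [[u _ ->]|h]; first by rewrite size_tuple.
by exists (ins n s); rewrite ?mem_enum // insK.
Qed.

Lemma count_tr n (P : AQV n -> bool) :
  count P (enum {: AQV n}) = count (fun s => P (ins n s)) (tuples n).
Proof.
rewrite -((permP (perm_tuples n)) (fun s => P (ins n s))).
elim: (enum _) => //= u l ->; by rewrite /ins valKd.
Qed.

Lemma sumn_tr n (F : AQV n -> nat) :
  sumn [seq F u | u <- enum {: AQV n}] = sumn [seq F (ins n s) | s <- tuples n].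
Proof.
rewrite -(perm_sumn (perm_map (fun s => F (ins n s)) (perm_tuples n))).
elim: (enum _) => //= u l ->; by rewrite /ins valKd.
Qed.

Lemma card_count (T : finType) (P : pred T) : #|[set x | P x]| = count P (enum T).
Proof.
rewrite cardsE cardE /enum_mem size_filter. rewrite /enum_mem filter_predT.
by apply: eq_count => x; rewrite !inE.
Qed.

Lemma exists_count (T : finType) (P : pred T) : [exists x, P x] = has P (enum T).
Proof.
apply/existsP/hasP => [[x px]|[x _ px]]; last by exists x.
by exists x; rewrite ?mem_enum.
Qed.

Lemma sum_count (T : finType) (F : T -> nat) : \sum_(x : T) F x = sumn [seq F x | x <- enum T].
Proof.
by rewrite sumnE big_map /index_enum /enum_mem filter_predT -enumT.
Qed.


Section Tr.
Variable n : nat.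
Variable A : {set AQV n}.
Let m := fun s => ins n s \in A.
Let vl := tuples n.

Lemma insadj s t : s \in vl -> t \in vl -> aq_adj (ins n s) (ins n t) = aq_adj s t.
Proof. by rewrite /vl !mem_tuples => hs ht; rewrite !insK. Qed.

Lemma cardA_tr : #|A| = count m vl.
Proof.
have e : [set x | x \in A] = A by apply/setP => x; rewrite inE.
by rewrite -{1}e card_count count_tr.
Qed.

Lemma bd_tr : #|bd A| = count (fun s => ~~ m s && has (fun t => m t && aq_adj t s) vl) vl.
Proof.
rewrite card_count count_tr; apply: eq_in_count => s hs /=.
rewrite exists_count !has_count count_tr; congr (_ && (0 < _)).
by apply: eq_in_count => t ht /=; rewrite insadj.
Qed.

Lemma E2_tr : #|E2 A| = sumn [seq count (fun t => m s && m t && aq_adj s t) vl | s <- vl].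
Proof.
rewrite -sum1_card big_mkcond /=.
under eq_bigr => p _ do rewrite inE.
rewrite -(pair_bigA _ (fun u v => if [&& u \in A, v \in A & aq_adj u v] then 1 else 0)) /=.
rewrite sum_count sumn_tr /vl /m; congr sumn; apply/eq_in_map => s hs.
rewrite sum_count sumn_tr -sumn_count; congr sumn; apply/eq_in_map => t ht /=.
by rewrite insadj // andbA; case: (_ && _ && _).
Qed.
End Tr.

Definition dot (r bs : seq bool) := count (fun p => p.1 && p.2) (zip r bs).
Definition row4 s := [seq aq_adj s t | t <- tuples 4].
Definition chk (M : seq (seq bool)) (bs : seq bool) : bool :=
  let k := count id bs in
  let bd := count (fun p => ~~ p.1 && (0 < dot p.2 bs)) (zip bs M) in
  let e2 := sumn [seq (if p.1 then dot p.2 bs else 0) | p <- zip bs M] in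
  (k == 0) || (2 * k + 12 + 2 * (1 < k) <= 2 * bd + e2).

Lemma chk_all0 : (let M := map row4 (tuples 4) in all (chk M) (tuples 16)) = true.
Proof. vm_compute. reflexivity. Qed.

Lemma chk_all : all (chk (map row4 (tuples 4))) (tuples 16).
Proof. exact: chk_all0. Qed.

Lemma RR4 : RR 4.
Proof.
move=> A A0.
set vl := tuples 4.
set m := fun s => ins 4 s \in A.
have hb : map m vl \in tuples 16 by rewrite mem_tuples size_map.
have := allP chk_all _ hb; rewrite /chk.
have hdot s : dot (row4 s) (map m vl) = count (fun t => aq_adj s t && m t) vl.
  by rewrite /dot /row4 zip_map count_map.
rewrite zip_map.
have -> : count id [seq m i | i <- vl] = count m vl by rewrite count_map.
have -> : count (fun p => ~~ p.1 && (0 < dot p.2 [seq m i | i <- vl]))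
       [seq (m i, row4 i) | i <- vl] =
       count (fun s => ~~ m s && has (fun t => m t && aq_adj t s) vl) vl.
  rewrite count_map; apply: eq_count => s.
  change (~~ m s && (0 < dot (row4 s) [seq m i | i <- vl]) = ~~ m s && has (fun t => m t && aq_adj t s) vl).
  rewrite hdot has_count.
  by congr (_ && (0 < _)); apply: eq_count => t; rewrite andbC aq_adj_sym.
have -> : sumn [seq (if p.1 then dot p.2 [seq m i | i <- vl] else 0)
          | p <- [seq (m i, row4 i) | i <- vl]] =
          sumn [seq count (fun t => m s && m t && aq_adj s t) vl | s <- vl].
  rewrite -map_comp; congr sumn; apply/eq_map => s.
  change ((if m s then dot (row4 s) [seq m i | i <- vl] else 0) = count (fun t => m s && m t && aq_adj s t) vl).
  rewrite hdot.
  case: (m s); last by rewrite -(count_pred0 vl); apply: eq_count.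
  by apply: eq_count => t; rewrite andbC.
rewrite -bd_tr -E2_tr -cardA_tr.
have : #|A| != 0 by rewrite cards_eq0.
rewrite /pot; set k := (1 < _); case: (#|A| == 0) => //= _; lia.
Qed.

Definition nb n (u : AQV n) := [set v : AQV n | aq_adj u v].

Lemma eq_tc n b c (u v : AQV n) : (tc b u == tc c v) = (b == c) && (u == v).
Proof.
apply/eqP/andP => [/tc_inj2 [-> ->]|[/eqP -> /eqP ->]] //.
Qed.

Lemma nb_tc n b (u : AQV n) :
  nb (tc b u) = tc b @: nb u :|: [set tc (~~b) u; tc (~~b) (cpl u)].
Proof.
apply/setP; apply: tcP => c v; rewrite !inE adj_tc mem_tc_imset !eq_tc !inE.
by case: b; case: c => /=; rewrite ?orbF // (eq_sym u).
Qed.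

Lemma card_nb_tc n b (u : AQV n) : #|nb (tc b u)| = #|nb u| + (u != cpl u).+1.
Proof.
rewrite nb_tc cardsU card_imset; last exact: tc_inj.
rewrite (_ : _ :&: _ = set0) ?cards0 ?subn0 ?cards2 ?eq_tc ?eqxx //.
apply/setP; apply: tcP => c v; rewrite !inE mem_tc_imset !eq_tc.
by case: b; case: c; rewrite /= ?andbF.
Qed.

Lemma deg n (u : AQV n.+1) : #|nb u| = (2 * n).+1.
Proof.
elim: n u => [|n IH] u; rewrite (tcE u) card_nb_tc.
  set w := [tuple of behead u].
  have -> : w != cpl w = false by rewrite (tuple0 w) (tuple0 (cpl _)) eqxx.
  rewrite (_ : nb w = set0) ?cards0 //; apply/setP => v.
  by rewrite !inE (tuple0 w) (tuple0 v).
by rewrite IH cpl_neq; lia.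
Qed.

Lemma set2_inv (T : finType) (u v x y : T) : [set u; v] = [set x; y] ->
  (u == x) && (v == y) || (u == y) && (v == x).
Proof.
move=> e.
have : u \in [set x; y] by rewrite -e !inE eqxx.
have : v \in [set x; y] by rewrite -e !inE eqxx orbT.
have : x \in [set u; v] by rewrite e !inE eqxx.
have : y \in [set u; v] by rewrite e !inE eqxx orbT.
rewrite !inE.
by do 4!(case/orP => /eqP ?; subst); rewrite ?eqxx ?orbT.
Qed.

Lemma AQE_pair n (u v : AQV n) : ([set u; v] \in AQE n) = aq_adj u v.
Proof.
rewrite inE; apply/existsP/idP => [[x /existsP [y /andP [h /eqP e]]]|h].
  case/orP: (set2_inv e) => /andP [/eqP -> /eqP ->] //.
  by rewrite aq_adj_sym.
by exists u; apply/existsP; exists v; rewrite h eqxx.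
Qed.

Section Hall.
Variables (I J : finType) (j0 : J).

Definition NB (r : I -> J -> bool) (X : {set I}) := [set j | [exists x in X, r x j]].

Definition hallc r (L : {set I}) := forall X : {set I}, X \subset L -> #|X| <= #|NB r X|.

Lemma NB_U r X Y : NB r (X :|: Y) = NB r X :|: NB r Y.
Proof.
apply/setP => j; rewrite !inE; apply/existsP/orP.
  by case=> x /andP []; rewrite inE => /orP [] h hr; [left|right]; apply/existsP; exists x; rewrite h.
by case=> /existsP [x /andP [h hr]]; exists x; rewrite inE h ?orbT.
Qed.

Lemma hall_ind k : forall (L : {set I}) r, #|L| < k -> hallc r L ->
  exists f : I -> J, {in L &, injective f} /\ forall x, x \in L -> r x (f x).
Proof.
elim: k => // k IH L r hk hc.
have [L0|[x0 x0L]] := set_0Vmem L.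
  by exists (fun _ => j0); split => x; rewrite L0 inE.
case: (boolP [exists X : {set I}, [&& X \subset L, X != set0, X != L & #|NB r X| <= #|X|]]).
- case/existsP => X /and4P [XL Xn0 XnL tight].
  have XpL : X \proper L by rewrite properEneq XnL.
  have [f1 [f1i f1r]] := IH X r (leq_trans (proper_card XpL) hk)
    (fun Y YX => hc Y (subset_trans YX XL)).
  set r2 := fun x j => r x j && (j \notin NB r X).
  have L'p : L :\: X \proper L.
    rewrite properEneq subsetDl andbT; apply/eqP => e.
    case/set0Pn: Xn0 => x xX; have := subsetP XL x xX; rewrite -e !inE xX //.
  have hc2 : hallc r2 (L :\: X).
    move=> Y YL.
    have hXY : #|X :|: Y| = #|X| + #|Y|.
      rewrite cardsU (_ : X :&: Y = set0) ?cards0 ?subn0 //.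
      apply/setP => x; rewrite !inE; apply/negP => /andP [xX xY].
      by have := subsetP YL x xY; rewrite !inE xX.
    have YL2 : Y \subset L := subset_trans YL (subsetDl _ _).
    have := hc (X :|: Y); rewrite subUset XL YL2 hXY NB_U => /(_ isT).
    have -> : NB r2 Y = NB r Y :\: NB r X.
      apply/setP => j; rewrite !inE /r2; apply/existsP/andP => [[x /and3P [xY h1 h2]]|[h2 /existsP [x /andP [xY h]]]].
        split; first by move: h2; rewrite inE.
        by apply/existsP; exists x; rewrite xY.
      by exists x; rewrite xY h inE.
    have := cardsUI (NB r X) (NB r Y).
    rewrite -(cardsID (NB r X) (NB r Y)) setIC.
    set a := #|NB r X :&: NB r Y|; set b := #|NB r Y :\: NB r X|.
    rewrite cardsU; set c := #|_ :&: _|; lia.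
  have [f2 [f2i f2r]] := IH _ r2 (leq_trans (proper_card L'p) hk) hc2.
  exists (fun x => if x \in X then f1 x else f2 x); split.
    move=> x y xL yL /=.
    case: ifP => xX; case: ifP => yX.
    + by apply: f1i.
    + move=> e; have := f2r y; rewrite !inE yX yL => /(_ isT) /andP [_].
      by rewrite -e inE; case/existsP; exists x; rewrite xX f1r.
    + move=> e; have := f2r x; rewrite !inE xX xL => /(_ isT) /andP [_].
      by rewrite e inE; case/existsP; exists y; rewrite yX f1r.
    + by apply: f2i; rewrite !inE ?xX ?yX.
  move=> x xL; case: ifP => xX; first exact: f1r.
  by have := f2r x; rewrite !inE xX xL => /(_ isT) /andP [].
- move=> nt.
  have : 0 < #|NB r [set x0]| by have := hc [set x0]; rewrite sub1set x0L cards1; apply.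
  case/card_gt0P => y0; rewrite inE => /existsP [x1]; rewrite inE => /andP [/eqP -> r0].
  set r' := fun x j => r x j && (j != y0).
  have Lp : L :\ x0 \proper L by rewrite properD1.
  have hc' : hallc r' (L :\ x0).
    move=> Y YL.
    have [->|Yn0] := eqVneq Y set0; first by rewrite cards0.
    have YL' : Y \subset L := subset_trans YL (subsetDl _ _).
    have YnL : Y != L.
      by apply/eqP => e; have := subsetP YL x0; rewrite e x0L !inE eqxx => /(_ isT).
    have : #|Y| < #|NB r Y|.
      rewrite ltnNge; apply/negP => h; move/negP: nt; apply; apply/existsP; exists Y.
      by rewrite YL' Yn0 YnL h.
    have -> : NB r' Y = NB r Y :\ y0.
      apply/setP => j; rewrite !inE /r'; apply/existsP/andP => [[x /and3P [xY h1 h2]]|[h2 /existsP [x /andP [xY h]]]].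
        by split => //; apply/existsP; exists x; rewrite xY.
      by exists x; rewrite xY h.
    have := cardsD1 y0 (NB r Y); lia.
  have [f' [f'i f'r]] := IH _ r' (leq_trans (proper_card Lp) hk) hc'.
  exists (fun x => if x == x0 then y0 else f' x); split.
    move=> x y xL yL /=.
    case: eqP => [->|/eqP xn]; case: eqP => [->|/eqP yn] //.
    + by move=> e; have := f'r y; rewrite !inE yn yL /r' -e eqxx andbF => /(_ isT).
    + by move=> e; have := f'r x; rewrite !inE xn xL /r' e eqxx andbF => /(_ isT).
    + by apply: f'i; rewrite !inE ?xn ?yn.
  move=> x xL; case: eqP => [->//|/eqP xn].
  by have := f'r x; rewrite !inE xn xL => /(_ isT) /andP [].
Qed.

Lemma hall (L : {set I}) r : hallc r L ->
  exists f : I -> J, {in L &, injective f} /\ forall x, x \in L -> r x (f x).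
Proof. exact: (@hall_ind #|L|.+1). Qed.
End Hall.

Import Order.TTheory GRing.Theory Num.Theory.

Section FPM.
Variables (n : nat) (FV : {set AQV n}) (FE : {set {set AQV n}}).

Definition gg (u v : AQV n) := [set u; v] \in rem_edges FV FE.

Lemma gg_sym u v : gg u v = gg v u.
Proof. by rewrite /gg setUC. Qed.

Lemma gg_prop u v : gg u v -> [/\ u \notin FV, v \notin FV & aq_adj u v].
Proof.
rewrite /gg inE AQE_pair => /andP [adj /andP [_ hd]].
by rewrite (disjointFr hd) ?(disjointFr hd (x := v)) ?inE ?eqxx ?orbT.
Qed.

Lemma gg_irr u : gg u u = false.
Proof. by apply/negP => /gg_prop [_ _]; rewrite aq_adj_irr. Qed.

Lemma rem_gg (u v : AQV n) : aq_adj u v -> u \notin FV -> v \notin FV -> [set u; v] \notin FE -> gg u v.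
Proof.
move=> adj hu hv he; rewrite /gg inE AQE_pair adj he /=.
rewrite -setI_eq0; apply/eqP/setP => x; rewrite !inE.
apply/negP => /andP [/orP [] /eqP -> h]; [by rewrite h in hu | by rewrite h in hv].
Qed.

Variable R : realFieldType.

Lemma fpm_of_hall : hallc gg (~: FV) -> has_fpm R FV FE.
Proof.
move=> hc.
have [s [si sr]] := hall [tuple of nseq n false] hc.
have sV x : x \in ~: FV -> s x \in ~: FV.
  by move=> /sr /gg_prop [_ h _]; rewrite inE.
pose S e := [set x in ~: FV | [set x; s x] == e].
exists (fun e => ((#|S e|)%:R / 2)%R); split.
  move=> e eR; apply/andP; split; first by rewrite divr_ge0 ?ler0n.
  rewrite ler_pdivrMr ?ltr0n // mul1r ler_nat.
  move: eR; rewrite inE => /andP [eA _]; move: eA.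
  rewrite inE => /existsP [u /existsP [w /andP [_ /eqP ->]]].
  apply: leq_trans (_ : #|[set u; w]| <= 2); last by rewrite cards2; case: (u != w).
  apply: subset_leq_card; apply/subsetP => x; rewrite inE => /andP [_ /eqP <-].
  by rewrite !inE eqxx.
move=> v vF.
have vV : v \in ~: FV by rewrite inE.
have [w wV ewv] : exists2 w, w \in ~: FV & s w = v.
  have e : s @: (~: FV) = ~: FV.
    apply/eqP; rewrite eqEcard card_in_imset // leqnn andbT.
    by apply/subsetP => y /imsetP [x xV ->]; exact: sV.
  by move: vV; rewrite -{1}e => /imsetP [x xV ->]; exists x.
have wv : w != v by apply/eqP => ewv'; have := sr w wV; rewrite ewv -ewv' gg_irr.
rewrite -mulr_suml -natr_sum.
suff -> : \sum_(i in rem_edges FV FE | v \in i) #|S i| = 2%N.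
  by rewrite divff // pnatr_eq0.
under eq_bigr => e _ do rewrite -sum1_card big_mkcond /=.
rewrite exchange_big /= /S.
transitivity (\sum_(x : AQV n) ((x \in ~: FV) && (v \in [set x; s x]) : nat)).
  apply: eq_bigr => x _.
  case: (boolP (x \in ~: FV)) => xV /=; last first.
    by rewrite big1 // => e _; rewrite !inE; move: xV; rewrite inE => /negbTE ->.
  have e0R : [set x; s x] \in rem_edges FV FE by exact: sr.
  case: (boolP (v \in [set x; s x])) => vin.
    rewrite (bigD1 [set x; s x]) ?e0R ?vin //= big1 ?addn0.
      by rewrite inE xV eqxx.
    by move=> e /andP [_ ne]; rewrite inE xV /= eq_sym (negbTE ne).
  rewrite big1 // => e /andP [_ ve]; rewrite inE xV /=.
  by case: eqP => // ee; move: vin; rewrite ee ve.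
have := cards2 v w; rewrite eq_sym wv => <-.
rewrite -sum1_card [RHS]big_mkcond /=; apply: eq_bigr => x _.
have wF : w \notin FV by move: wV; rewrite inE.
rewrite !inE.
case: (x =P v) => [->|xnv]; first by rewrite vF eqxx.
case: (x =P w) => [->|xnw]; first by rewrite wF ewv eqxx orbT.
case: (boolP (x \in FV)) => //= xF.
case: (v =P x) => [vx|_]; first by case: xnv.
case: (v =P s x) => // vsx.
by exfalso; apply: xnw; apply: si; rewrite ?inE ?xF // ewv.
Qed.
End FPM.

Lemma RR_all n : 4 <= n -> RR n.
Proof.
elim: n => // n IH hn.
have [e3|ne3] := eqVneq n 3; first by rewrite e3; exact: RR4.
apply: RR_step; first lia.
by apply: IH; lia.
Qed.

Section Count.
Variables (n : nat) (FV : {set AQV n}) (FE : {set {set AQV n}}).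
Variables (I S : {set AQV n}).
Hypothesis IV : I \subset ~: FV.
Hypothesis SI : [disjoint I & S].
Hypothesis IS : forall a w, a \in I -> gg FV FE a w -> w \in S.

Lemma IF a : a \in I -> a \notin FV.
Proof. by move=> aI; have := subsetP IV a aI; rewrite inE. Qed.

Lemma count_bound : 2 * #|bd I| + #|E2 I| <= 2 * (#|S| + #|FV| + #|FE|).
Proof.
set Bout := [set w | [&& w \notin I, w \notin S, w \notin FV & [exists a in I, aq_adj a w]]].
set FEin := [set e in FE | e \subset I].
set FEout := [set e in FE | ~~ (e \subset I)].
have h1 : #|bd I| <= #|S| + #|FV| + #|Bout|.
  apply: leq_trans (_ : #|S :|: FV :|: Bout| <= _); last first.
    by apply: leq_trans (leq_card_setU _ _) _; rewrite leq_add2r; exact: leq_card_setU.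
  apply: subset_leq_card; apply/subsetP => w; rewrite !inE => /andP [wI ex].
  case: (boolP (w \in S)) => //= wS; case: (boolP (w \in FV)) => //= wF.
  by rewrite wI ex.
have h2 : #|FEin| + #|FEout| <= #|FE|.
  apply: lower_disj; try by apply/subsetP => e; rewrite inE => /andP [].
  rewrite -setI_eq0; apply/eqP/setP => e; rewrite !inE.
  by case: (e \subset I); rewrite ?andbF.
have h3 : #|Bout| <= #|FEout|.
  pose phi (w : AQV n) := [set w; odflt w [pick a in I | aq_adj a w]].
  have hphi w : w \in Bout -> exists2 a, a \in I & (aq_adj a w /\ phi w = [set w; a]).
    rewrite !inE => /and4P [_ _ _ /existsP [a0 h0]].
    rewrite /phi; case: pickP => [a /andP [aI adj]|none]; first by exists a.
    by move: (none a0); rewrite h0.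
  rewrite -(card_in_imset (f := phi)).
    apply: subset_leq_card; apply/subsetP => e /imsetP [w wB ->].
    have [a aI [adj ->]] := hphi w wB.
    move: wB; rewrite !inE => /and4P [wI wS wF _].
    apply/andP; split.
      case: (boolP ([set w; a] \in FE)) => // he; case/negP: wS; apply: (IS aI).
      by apply: (rem_gg adj (IF aI) wF); rewrite setUC.
    by apply/negP => /subsetP /(_ w); rewrite !inE eqxx (negbTE wI) => /(_ isT).
  move=> w w' wB w'B.
  have [a aI [_ ->]] := hphi w wB; have [a' a'I [_ ->]] := hphi w' w'B => e.
  have : w \in [set w'; a'] by rewrite -e !inE eqxx.
  rewrite !inE => /orP [/eqP //|/eqP ewa].
  by move: wB; rewrite !inE ewa a'I.
have h4 : #|E2 I| <= 2 * #|FEin|.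
  pose psi (p : AQV n * AQV n) := ([set p.1; p.2], (enum_rank p.1 < enum_rank p.2)%N).
  rewrite mulnC -(card_bool) -cardsT -cardsX -(card_in_imset (f := psi)).
    apply: subset_leq_card; apply/subsetP => q /imsetP [[a b]]; rewrite !inE /= => /and3P [aI bI adj] ->.
    rewrite /psi /= andbT; apply/andP; split.
      case: (boolP ([set a; b] \in FE)) => // he; have := IS aI (rem_gg adj (IF aI) (IF bI) he).
      by move=> bS; move: SI; rewrite -setI_eq0 => /eqP /setP /(_ b); rewrite !inE bI bS.
    by apply/subsetP => x; rewrite !inE => /orP [] /eqP ->.
  move=> [a b] [c d]; rewrite !inE /= => /and3P [_ _ adj] /and3P [_ _ adj'] [e r].
  case/orP: (set2_inv e) => /andP [/eqP e1 /eqP e2]; first by rewrite e1 e2.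
  move: adj r; rewrite e1 e2 => adj r; exfalso.
  have : d != c by apply/negP => /eqP eab; rewrite eab aq_adj_irr in adj.
  rewrite -(inj_eq (@enum_rank_inj _)) -(inj_eq val_inj) /=.
  move: r; set x := nat_of_ord _; set y := nat_of_ord _ => r.
  by move=> ne; move: r ne; case: ltngtP.
rewrite /pot; lia.
Qed.
End Count.

Import Order.TTheory GRing.Theory Num.Theory.

Lemma violator n (FV : {set AQV n}) FE : ~ hallc (gg FV FE) (~: FV) ->
  exists X : {set AQV n}, X \subset ~: FV /\ #|NB (gg FV FE) X| < #|X|.
Proof.
move=> nh.
case: (boolP [forall X : {set AQV n}, (X \subset ~: FV) ==> (#|X| <= #|NB (gg FV FE) X|)]) => [h|].
  by exfalso; apply: nh => X XV; move/forallP: h => /(_ X); rewrite XV.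
case/forallPn => X; rewrite negb_imply -ltnNge => /andP [XV lt].
by exists X.
Qed.

Lemma lower_main n (hn : 4 <= n) (R : realFieldType) (FV : {set AQV n}) FE :
  is_fsmp_set R FV FE ->
  (2 * n - 1 <= fault_size FV FE) /\
  (fault_size FV FE = 2 * n - 1 -> exists v, isolated_in FV FE v).
Proof.
case => hv hnf.
have nh : ~ hallc (gg FV FE) (~: FV) := fun h => hnf (fpm_of_hall R h).
have [X [XV hX]] := violator nh.
set N := NB (gg FV FE) X.
set I := X :\: N; set S := N :\: X.
have IV : I \subset ~: FV by apply: subset_trans XV; exact: subsetDl.
have SI : [disjoint I & S].
  rewrite -setI_eq0; apply/eqP/setP => x; rewrite !inE.
  by case: (x \in X); case: (x \in N); rewrite ?andbF.
have IS : forall a w, a \in I -> gg FV FE a w -> w \in S.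
  move=> a w; rewrite [a \in I]inE => /andP [aN aX] g.
  have wN : w \in N by rewrite inE; apply/existsP; exists a; rewrite aX.
  rewrite [w \in S]inE wN andbT; apply/negP => wX; move/negP: aN; apply.
  by rewrite inE; apply/existsP; exists w; rewrite wX gg_sym.
have hIS : #|S| < #|I|.
  rewrite /S /I !cardsD setIC.
  have : #|X :&: N| <= #|N| by apply: subset_leq_card; exact: subsetIr.
  have hX' : #|N| < #|X| := hX.
  move=> h; apply: ltn_sub2r => //; exact: leq_ltn_trans h hX'.
have I0 : I != set0 by rewrite -card_gt0; lia.
have key := leq_trans (RR_all hn I0) (count_bound IV SI IS).
rewrite /fault_size.
case: (ltnP 1 #|I|) => hI in key.
  have key' : 2 * #|I| + 2 * (2 * n - 2) + 2 <= 2 * (#|S| + #|FV| + #|FE|) := key.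
  split; first lia.
  move=> e; exfalso; lia.
have key' : 2 * #|I| + 2 * (2 * n - 2) + 0 <= 2 * (#|S| + #|FV| + #|FE|) := key.
split; first lia.
move=> _.
have I1 : #|I| = 1 by move: I0; rewrite -card_gt0; lia.
have S0 : S = set0 by apply/eqP; rewrite -cards_eq0; lia.
have /cards1P [v Iv] : #|I| == 1 by apply/eqP.
have vI : v \in I by rewrite Iv inE.
exists v; split; first by have := subsetP IV v vI; rewrite inE.
move=> e eR; apply/negP => ve.
have eR' := eR.
move: eR; rewrite inE => /andP [eA _]; move: eA.
rewrite inE => /existsP [x /existsP [y /andP [adj /eqP ee]]].
move: ve; rewrite ee !inE => /orP [] /eqP vE.
  have := IS v y vI; rewrite /gg vE -ee => /(_ eR').
  by rewrite S0 inE.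
have := IS v x vI; rewrite /gg vE setUC -ee => /(_ eR').
by rewrite S0 inE.
Qed.

Lemma upper m (R : realFieldType) :
  let v0 := [tuple of nseq m.+1 false] in
  let FE0 := [set [set v0; u] | u in nb v0] in
  is_fsmp_set R set0 FE0 /\ fault_size (set0 : {set AQV m.+1}) FE0 = (2 * m).+1.
Proof.
move=> v0 FE0.
have hE : forall e, e \in rem_edges set0 FE0 -> v0 \in e -> False.
  move=> e; rewrite inE => /andP [eA /andP [eF _]] ve.
  move: eA; rewrite inE => /existsP [x /existsP [y /andP [adj /eqP ee]]].
  move: ve; rewrite ee !inE => /orP [] /eqP vE.
    move/negP: eF; apply; rewrite ee -vE; apply/imsetP; exists y => //.
    by rewrite inE vE.
  move/negP: eF; apply; rewrite ee -vE setUC; apply/imsetP; exists x => //.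
  by rewrite inE vE aq_adj_sym.
split; last first.
  rewrite /fault_size cards0 add0n card_in_imset ?deg //.
  move=> u u' uN u'N /= e.
  case/orP: (set2_inv e) => [/andP [_ /eqP //]|/andP [/eqP e1 /eqP e2]].
  by move: uN; rewrite inE e2 aq_adj_irr.
split.
  apply/subsetP => e /imsetP [u uN ->]; rewrite AQE_pair.
  by move: uN; rewrite inE.
case=> f [_ hf].
have := hf v0; rewrite inE => /(_ isT).
rewrite big1; last by move=> e /andP [eR ve]; exfalso; exact: hE eR ve.
by move/eqP; rewrite eq_sym oner_eq0.
Qed.

Theorem theorem3p9 (R : realFieldType) (n : nat) (hn : 4 <= n) :
  fsmp_is R n (2 * n - 1) /\
  (forall (FV : {set AQV n}) (FE : {set {set AQV n}}),
     is_fsmp_set R FV FE -> fault_size FV FE = (2 * n - 1)%N ->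
     exists v : AQV n, isolated_in FV FE v).
Proof.
split; last by move=> FV FE h hs; exact: (lower_main hn h).2 hs.
split; last by move=> FV FE h; exact: (lower_main hn h).1.
case: n hn => // m hm.
have [h1 h2] := upper m R.
exists set0; eexists; split; first exact: h1.
rewrite h2; lia.
Qed.
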